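(* Let $\boldsymbol H:\mathbb T^N\to\mathbb T^N$ satisfy Assumptions (H1) and (H2), let $N$ be sufficiently large, fix $i\in[1,N]$, let $\boldsymbol\Phi_i$ be the diffeomorphism described below, and define $G_i(y_i;\hat{\boldsymbol y}_i):=H_i(\boldsymbol\Phi_i(y_i;\hat{\boldsymbol y}_i))$. Then there is $\mathcal K_\#$ depending only on $E,\kappa,K$ such that $$d_{C^2}\big(G_i(\cdot;\hat{\boldsymbol x}_i),\,H_i(\cdot;\hat{\boldsymbol x}_i)\big)\le\mathcal K_\#N^{-1}\qquad\forall\hat{\boldsymbol x}_i\in\mathbb T^{N-1}.$$
   Context: $\mathbb T=\mathbb R/\mathbb Z$; derivatives via lifts; $d_{C^2}$ between circle maps is the max of sup-distances of lifts and of their first two derivatives. $\boldsymbol x=(x_i;\hat{\boldsymbol x}_i)$; $H_i$ is the $i$-th component of $\boldsymbol H$, $\hat{\boldsymbol H}_i$ the others. Assumption (H1), datum $(E,\kappa)$, $\kappa-E>1$: $\boldsymbol H\in C^1$, $|\partial_iH_i|>\kappa$, $|\partial_jH_i|<EN^{-1}$ for $j\ne i$. Assumption (H2), datum $(E,K)$: $\boldsymbol H\in C^3$, $|\partial_i^2H_i|\le K$, $|\partial_k\partial_jH_i|\le EN^{-1}$ if $j\ne i$ and $\le EN^{-2}$ if $i,j,k$ distinct, and for distinct $\ell,j,k$: $|\partial_\ell\partial_j^2H_j|\le EN^{-1}$, $|\partial_\ell\partial_k\partial_jH_j|\le EN^{-2}$. Under (H1), for $N$ large, there is a diffeomorphism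 $\boldsymbol\Phi_i:\mathbb T\times\mathbb T^{N-1}\to\mathbb T^N$ with $\Phi_{i,i}(y_i;\hat{\boldsymbol y}_i)=y_i$ and $\hat{\boldsymbol H}_i(\boldsymbol\Phi_i(y_i;\hat{\boldsymbol y}_i))=\hat{\boldsymbol H}_i(0;\hat{\boldsymbol y}_i)$, whose images of the circles $\mathbb T\times\{\hat{\boldsymbol y}_i\}$ are the connected components of the preimages $\boldsymbol H^{-1}(\{(x;\hat{\boldsymbol x}_i):x\in\mathbb T\})$, each homotopic to $\mathbb T\times\{\hat{\boldsymbol y}_i\}$; under (H2) it satisfies $|\partial_i\Phi_{i,m}|_\infty\le\mathcal K_\#N^{-1}$ for $m\ne i$. *)

(* Defs.v *)
(* Points of R^N (lifts of points of T^N) are row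
   vectors 'rV[R]_N; maps T^N -> T^N are represented by their lifts
   'rV[R]_N -> 'rV[R]_N. *)
From HB Require Import structures.
From mathcomp Require Import all_boot all_order all_algebra.
From mathcomp Require Import all_classical all_reals all_analysis.
Set Implicit Arguments. Unset Strict Implicit. Unset Printing Implicit Defensive.
Import Order.TTheory GRing.Theory Num.Theory.
Import numFieldNormedType.Exports.
Local Open Scope ring_scope.

Definition ev (R : realType) (N : nat) (j : 'I_N) : 'rV[R]_N :=
  \row_k (k == j)%:R.

(* the point (t ; \hat x_i): x with its i-th coordinate replaced by t *)
Definition setc (R : realType) (N : nat) (x : 'rV[R]_N) (i : 'I_N) (t : R)
  : 'rV[R]_N := \row_k (if k == i then t else x 0 k).

Definition cmpt (R : realType) (N : nat) (H : 'rV[R]_N -> 'rV[R]_N) (l : 'I_N)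
  : 'rV[R]_N -> R := fun x => H x 0 l.

Definition partial (R : realType) (N : nat) (f : 'rV[R]_N -> R) (j : 'I_N)
  : 'rV[R]_N -> R := fun x => derive f x (ev R j).

Fixpoint Ck (R : realType) (N : nat) (k : nat) (f : 'rV[R]_N -> R) : Prop :=
  continuous f /\
  match k with
  | 0 => True
  | k'.+1 => forall j : 'I_N,
      (forall x, derivable f x (ev R j)) /\ Ck k' (partial f j)
  end.

(* F : R^N -> R^N is the lift of a (continuous) map T^N -> T^N *)
Definition torus_lift (R : realType) (N : nat) (F : 'rV[R]_N -> 'rV[R]_N)
  : Prop :=
  (forall l, continuous (cmpt F l)) /\
  forall x (j l : 'I_N), F (x + ev R j) 0 l - F x 0 l \is a Num.int.

Definition H1 (R : realType) (N : nat) (E kappa : R)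
  (H : 'rV[R]_N -> 'rV[R]_N) : Prop :=
  torus_lift H /\
  (forall l, Ck 1 (cmpt H l)) /\
  (forall (i : 'I_N) x, kappa < `|partial (cmpt H i) i x|) /\
  (forall (i j : 'I_N) x, j != i ->
     `|partial (cmpt H i) j x| < E / N%:R).

Definition H2 (R : realType) (N : nat) (E K : R)
  (H : 'rV[R]_N -> 'rV[R]_N) : Prop :=
  torus_lift H /\
  (forall l, Ck 3 (cmpt H l)) /\
  (forall (i : 'I_N) x, `|partial (partial (cmpt H i) i) i x| <= K) /\
  (forall (i j k : 'I_N) x, j != i ->
     `|partial (partial (cmpt H i) j) k x| <= E / N%:R) /\
  (forall (i j k : 'I_N) x, i != j -> j != k -> i != k ->
     `|partial (partial (cmpt H i) j) k x| <= E / (N%:R ^+ 2)) /\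
  (forall (l j k : 'I_N) x, l != j -> j != k -> l != k ->
     `|partial (partial (partial (cmpt H j) j) j) l x| <= E / N%:R) /\
  (forall (l j k : 'I_N) x, l != j -> j != k -> l != k ->
     `|partial (partial (partial (cmpt H j) j) k) l x| <= E / (N%:R ^+ 2)).

(* Phi is (a lift of) the diffeomorphism Phi_i : T x T^{N-1} -> T^N described
   in the context; the point (y_i ; \hat y_i) is the vector y, with y_i = y 0 i.
   Lifts are normalized so that Phi_i (0 ; \hat y_i) = (0 ; \hat y_i). *)
Definition is_Phi (R : realType) (N : nat) (H : 'rV[R]_N -> 'rV[R]_N)
  (i : 'I_N) (Phi : 'rV[R]_N -> 'rV[R]_N) : Prop :=
  torus_lift Phi /\ (forall l, Ck 2 (cmpt Phi l)) /\
  (exists Psi : 'rV[R]_N -> 'rV[R]_N,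
      torus_lift Psi /\ (forall l, Ck 1 (cmpt Psi l)) /\
      cancel Phi Psi /\ cancel Psi Phi) /\
  (* the circles T x {\hat y_i} go to loops homotopic to T x {\hat y_i} *)
  (forall y, Phi (y + ev R i) = Phi y + ev R i) /\
  (forall y, Phi y 0 i = y 0 i) /\
  (forall y (l : 'I_N), l != i -> cmpt H l (Phi y) = cmpt H l (setc y i 0)) /\
  (forall y, Phi (setc y i 0) = setc y i 0).

Definition dC2_le (R : realType) (g h : R -> R) (c : R) : Prop :=
  forall t : R,
    `|g t - h t| <= c /\
    `|derive1n 1 g t - derive1n 1 h t| <= c /\
    `|derive1n 2 g t - derive1n 2 h t| <= c.

(* Main.v *)
Require Import Defs.
From HB Require Import structures.
From mathcomp Require Import all_boot all_order all_algebra.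
From mathcomp Require Import all_classical all_reals all_analysis.
From mathcomp Require Import ring lra zify.
From Stdlib Require Import Lia.
Set Implicit Arguments. Unset Strict Implicit. Unset Printing Implicit Defensive.
Import Order.TTheory GRing.Theory Num.Theory.
Import numFieldNormedType.Exports.
Local Open Scope ring_scope.
Local Open Scope classical_set_scope.

Section S.
Variable R : realType.

Lemma line_is_derive N (f : 'rV[R]_N -> R) (y : 'rV[R]_N) (j : 'I_N) (s : R) :
  derivable f (y + s *: ev R j) (ev R j) ->
  is_derive s 1 (fun u : R => f (y + u *: ev R j)) (partial f j (y + s *: ev R j)).
Proof.
move=> df.
have E : (fun h : R => h^-1 *: (((fun u : R => f (y + u *: ev R j)) \o shift s) (h *: 1)
             - (fun u : R => f (y + u *: ev R j)) s)) =
         (fun h : R => h^-1 *: ((f \o shift (y + s *: ev R j)) (h *: ev R j)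
             - f (y + s *: ev R j))).
  apply/funext => h /=; congr (_ *: (f _ - _)).
  by rewrite scaler1 scalerDl addrCA.
split; rewrite /derivable /derive /partial E //.
Qed.

Lemma derivable_cont (g : R -> R) : (forall s, derivable g s 1) -> continuous g.
Proof.
move=> dg s; apply: differentiable_continuous; exact/derivable1_diffP.
Qed.

Lemma MVB (g : R -> R) (a b M : R) : (forall s, derivable g s 1) ->
  (forall s, Num.min a b <= s <= Num.max a b -> `|g^`() s| <= M) ->
  `|g b - g a| <= M * `|b - a|.
Proof.
move=> dg.
wlog ab : a b / a <= b.
  move=> W Hb; case: (leP a b) => [ab|ba]; first exact: W.
  rewrite distrC (distrC b); apply: W; first exact: ltW.
  by move=> s hs; apply: Hb; rewrite minC maxC.
move=> Hb.
have [c cab ->] := @MVT_segment R g (g^`()) a b ab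
   (fun x _ => ltac:(rewrite derive1E; exact: derivableP))
   (continuous_subspaceT (derivable_cont dg)).
rewrite normrM ler_wpM2r //; apply: Hb.
by move: cab; rewrite in_itv /= (min_l ab) (max_r ab).
Qed.

Definition mixv N (y z : 'rV[R]_N) (k : nat) : 'rV[R]_N :=
  \row_m (if (m < k)%N then y 0 m else z 0 m).

Lemma mixv0 N (y z : 'rV[R]_N) : mixv y z 0 = z.
Proof. by apply/rowP => m; rewrite !mxE /=. Qed.

Lemma mixvN N (y z : 'rV[R]_N) : mixv y z N = y.
Proof. by apply/rowP => m; rewrite !mxE ltn_ord. Qed.

Lemma mixvS N (y z : 'rV[R]_N) (k : 'I_N) :
  mixv y z k.+1 = mixv y z k + (y 0 k - z 0 k) *: ev R k.
Proof.
apply/rowP => m; rewrite !mxE ltnS leq_eqVlt.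
case: (eqVneq m k) => [->|mk] /=; first by rewrite eqxx ltnn mulr1 addrC subrK.
have -> : (nat_of_ord m == nat_of_ord k) = false by apply/negbTE.
by rewrite mulr0 addr0.
Qed.

Lemma telesc N (f : 'rV[R]_N -> R) (y z : 'rV[R]_N) :
  f y - f z = \sum_(k < N) (f (mixv y z k.+1) - f (mixv y z k)).
Proof.
rewrite -(big_mkord xpredT (fun k => f (mixv y z k.+1) - f (mixv y z k))).
by rewrite telescope_sumr // mixvN mixv0.
Qed.

Lemma multilip N (f : 'rV[R]_N -> R) (y z : 'rV[R]_N) (M : R) :
  (forall j x, derivable f x (ev R j)) ->
  (forall j x, y 0 j != z 0 j -> `|partial f j x| <= M) ->
  `|f y - f z| <= M * \sum_k `|y 0 k - z 0 k|.
Proof.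
move=> df hM; rewrite telesc mulr_sumr; apply: (le_trans (ler_norm_sum _ _ _)).
apply: ler_sum => k _.
case: (eqVneq (y 0 k) (z 0 k)) => [e|ne].
  by rewrite mixvS e subrr scale0r addr0 subrr normr0 mulr0.
rewrite mixvS.
set w := mixv y z k.
have dg : forall s, derivable (fun u : R => f (w + u *: ev R k)) s 1.
  by move=> s; have [] := line_is_derive (df k (w + s *: ev R k)).
have := @MVB (fun u : R => f (w + u *: ev R k)) 0 (y 0 k - z 0 k) M dg.
rewrite scale0r addr0 subr0; apply => s _.
rewrite derive1E; have [_ ->] := line_is_derive (df k (w + s *: ev R k)).
exact: hM.
Qed.

Lemma is_derive_cvg (f : R -> R) t (L : R) :
  (fun h : R => h^-1 *: ((f \o shift t) (h *: 1) - f t)) @ 0^' --> L ->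
  is_derive t 1 f L.
Proof.
move=> H; split; first by apply/cvg_ex; exists L.
rewrite /derive; exact: cvg_lim.
Qed.

Lemma ballrV N (x z : 'rV[R]_N) (d : R) : 0 < d ->
  (forall m, `|x 0 m - z 0 m| < d) -> ball x d z.
Proof. by move=> d0 H; split => // i j; rewrite (ord1 i); exact: H. Qed.

Lemma idcvg : (fun h : R => h) @ 0^' --> (0:R).
Proof. exact: (cvg_within_filter _ cvg_id). Qed.

Lemma between_abs (u D : R) : Num.min 0 D <= u <= Num.max 0 D -> `|u| <= `|D|.
Proof.
case: (leP 0 D) => D0 /andP[a b].
  by rewrite (ger0_norm D0) ger0_norm.
by rewrite (ltr0_norm D0) ler0_norm // lerN2.
Qed.

Lemma CR_term N (f : 'rV[R]_N -> R) (g : R -> 'rV[R]_N) (k : 'I_N) (dk t : R) :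
 (forall x, derivable f x (ev R k)) -> continuous (partial f k) ->
 (forall m, (fun h : R => g (h + t) 0 m - g t 0 m) @ 0^' --> (0:R)) ->
 (fun h : R => h^-1 * (g (h + t) 0 k - g t 0 k)) @ 0^' --> dk ->
 (fun h : R => h^-1 * (f (mixv (g (h + t)) (g t) k.+1) - f (mixv (g (h+t)) (g t) k)))
   @ 0^' --> partial f k (g t) * dk.
Proof.
move=> df cf gc hq.
set c := partial f k (g t).
apply: (@cvg_sub0 _ _ _ _ _ _ (fun h => c * (h^-1 * (g (h + t) 0 k - g t 0 k))));
  last exact: cvgMl_tmp.
apply/cvgr0Pnorm_le => e e0.
set e' := e / (`|dk| + 1).
have dk1 : 0 < `|dk| + 1 by rewrite ltr_wpDl.
have e'0 : 0 < e' by rewrite divr_gt0.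
have [d d0 Hd] : exists2 d, 0 < d & forall z, ball (g t) d z -> `|c - partial f k z| <= e'.
  have := cf (g t); move/cvgrPdist_le => /(_ e' e'0) /nbhs_ballP [d d0 Hd].
  by exists d.
have Hall : \forall h \near 0^', forall m, `|g (h + t) 0 m - g t 0 m| < d.
  apply: filter_forall => m; have := gc m; move/cvgr0Pnorm_lt; exact.
have Hb := (iffLR (cvgrPdist_le _ _) hq) 1 ltr01.
near=> h.
have hn0 : h != 0 by near: h; exact: nbhs_dnbhs_neq.
have Hh : forall m, `|g (h + t) 0 m - g t 0 m| < d by near: h.
have Hbh : `|dk - h^-1 * (g (h+t) 0 k - g t 0 k)| <= 1 by near: h; exact: Hb.
rewrite !fctE /= mixvS.
set D := g (h + t) 0 k - g t 0 k.
set w := mixv (g (h + t)) (g t) k.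
have key : `|f (w + D *: ev R k) - f w - c * D| <= e' * `|D|.
  pose phi := fun u : R => f (w + u *: ev R k) - c * u.
  have dphi : forall u : R, is_derive u (1:R) phi (partial f k (w + u *: ev R k) - c).
    move=> u; have l := line_is_derive (df (w + u *: ev R k)).
    have := is_deriveB l (is_deriveZ c (is_derive_id u (1:R))).
    have -> : phi = (fun u => f (w + u *: ev R k)) - c \*: id.
      by apply/funext => v; rewrite /phi !fctE.
    by rewrite /GRing.scale /= mulr1.
  have dg : forall u : R, derivable phi u 1 by move=> u; case: (dphi u).
  have := @MVB phi 0 D e' dg.
  rewrite /phi scale0r addr0 mulr0 !subr0 addrAC; apply => u hu.
  rewrite -/phi derive1E; have [_ ->] := dphi u.
  rewrite distrC; apply: Hd; apply: ballrV => // m.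
  rewrite /w !mxE.
  case: (eqVneq m k) => [->|mk].
    rewrite ltnn /= mulr1 opprD addrA subrr sub0r normrN.
    exact: le_lt_trans (between_abs hu) (Hh k).
  rewrite /= mulr0 addr0; case: ifP => _; last by rewrite subrr normr0.
  by rewrite distrC; exact: Hh.
rewrite mulrCA -mulrBr normrM.
apply: le_trans (ler_wpM2l (normr_ge0 _) key) _.
rewrite mulrCA -normrM.
have hx : `|h^-1 * D| <= `|dk| + 1.
  have E : dk - (dk - h^-1 * D) = h^-1 * D by ring.
  rewrite -E; apply: le_trans (ler_normB _ _) _; exact: lerD.
apply: le_trans (ler_wpM2l (ltW e'0) hx) _.
by rewrite /e' divfK // gt_eqF.
Unshelve. all: by end_near.
Qed.

Lemma CR N (f : 'rV[R]_N -> R) (g : R -> 'rV[R]_N) (d : 'I_N -> R) (t : R) :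
 (forall j x, derivable f x (ev R j)) -> (forall j, continuous (partial f j)) ->
 (forall m, is_derive t (1:R) (fun s => g s 0 m) (d m)) ->
 is_derive t (1:R) (f \o g) (\sum_m partial f m (g t) * d m).
Proof.
move=> df cf dg.
have hq : forall m, (fun h : R => h^-1 * (g (h + t) 0 m - g t 0 m)) @ 0^' --> d m.
  move=> m; have [ex v] := dg m; rewrite -v.
  have -> : (fun h : R => h^-1 * (g (h + t) 0 m - g t 0 m)) =
    (fun h : R => h^-1 *: (((fun s => g s 0 m) \o shift t) (h *: 1) - g t 0 m)).
    by apply/funext => h /=; rewrite /GRing.scale /= mulr1.
  exact: ex.
have gc : forall m, (fun h : R => g (h + t) 0 m - g t 0 m) @ 0^' --> (0:R).
  move=> m.
  have H : (fun h : R => h * (h^-1 * (g (h + t) 0 m - g t 0 m))) @ 0^' --> (0:R).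
    have := cvgM idcvg (hq m); rewrite mul0r; apply; exact: _.
  apply/cvgr0Pnorm_le => e e0.
  move/cvgr0Pnorm_le: H => /(_ e e0) He.
  near=> h.
  have hn0 : h != 0 by near: h; exact: nbhs_dnbhs_neq.
  have : `|h * (h^-1 * (g (h + t) 0 m - g t 0 m))| <= e by near: h; exact: He.
  by rewrite mulrA mulfV ?mul1r.
apply: is_derive_cvg.
have -> : (fun h : R => h^-1 *: (((f \o g) \o shift t) (h *: 1) - (f \o g) t)) =
  (fun h : R => \sum_(k < N) h^-1 * (f (mixv (g (h + t)) (g t) k.+1) - f (mixv (g (h+t)) (g t) k))).
  by apply/funext => h /=; rewrite -mulr_sumr -telesc /GRing.scale /= mulr1.
apply: cvg_big => //; first exact: add_continuous.
by move=> k _; apply: CR_term.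
Unshelve. all: by end_near.
Qed.
End S.

Section S.
Variable R : realType.

Lemma limbound (phi : R -> R) (l c : R) : phi @ 0^' --> l ->
  (forall h, h != 0 -> `|phi h| <= c) -> `|l| <= c.
Proof.
move=> H hb; apply/ler_addgt0Pr => e e0.
have He := (iffLR (cvgrPdist_lt _ _) H) e e0.
near (0:R)^' => h.
have hh : `|l - phi h| < e by near: h; exact: He.
have hn0 : h != 0 by near: h; exact: nbhs_dnbhs_neq.
have E : l = phi h + (l - phi h) by ring.
rewrite E; apply: le_trans (ler_normD _ _) _; apply: lerD; first exact: hb.
exact: ltW.
Unshelve. all: by end_near.
Qed.

Lemma partial_cvg N (f : 'rV[R]_N -> R) (u : 'I_N) (y : 'rV[R]_N) :
  derivable f y (ev R u) ->
  (fun h : R => h^-1 * (f (y + h *: ev R u) - f y)) @ 0^' --> partial f u y.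
Proof.
move=> d; rewrite /partial /derive.
have -> : (fun h : R => h^-1 * (f (y + h *: ev R u) - f y)) =
  (fun h : R => h^-1 *: ((f \o shift y) (h *: ev R u) - f y)).
  apply/funext => h /=; rewrite [y + _]addrC //.
exact: d.
Qed.

Lemma lite N (f : 'rV[R]_N -> R) (u v : 'I_N) (M : R) :
 (forall x, derivable f x (ev R u)) -> (forall x, derivable f x (ev R v)) ->
 (forall x, derivable (partial f v) x (ev R u)) ->
 (forall x, `|partial (partial f v) u x| <= M) ->
 forall x w, `|partial f u (x + w *: ev R v) - partial f u x| <= M * `|w|.
Proof.
move=> du dv dvu hM x w.
set y1 := x + w *: ev R v.
have H : (fun h : R => h^-1 * (f (y1 + h *: ev R u) - f y1) - h^-1 * (f (x + h *: ev R u) - f x))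
   @ 0^' --> partial f u y1 - partial f u x.
  by apply: cvgB; apply: partial_cvg.
apply: (limbound H) => h hn0.
rewrite -mulrBr normrM.
set D := (_ - _ - _).
have key : `|D| <= M * `|h| * `|w|.
  pose g := fun s : R => f (x + s *: ev R v + h *: ev R u) - f (x + s *: ev R v).
  have dg : forall s : R, is_derive s (1:R) g
      (partial f v (x + h *: ev R u + s *: ev R v) - partial f v (x + s *: ev R v)).
    move=> s; have l1 := line_is_derive (dv (x + h *: ev R u + s *: ev R v)).
    have l2 := line_is_derive (dv (x + s *: ev R v)).
    have -> : g = (fun s => f (x + h *: ev R u + s *: ev R v)) - (fun s => f (x + s *: ev R v)).
      by apply/funext => s'; rewrite /g !fctE; congr (f _ - _); rewrite addrAC.
    exact: is_deriveB.
  have dg' : forall s : R, derivable g s 1 by move=> s; case: (dg s).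
  have := @MVB R g 0 w (M * `|h|) dg'.
  rewrite /g !scale0r !addr0 subr0 => Hm.
  have -> : D = f (x + w *: ev R v + h *: ev R u) - f (x + w *: ev R v) -
               (f (x + h *: ev R u) - f x) by rewrite /D; ring.
  apply: Hm => s _; rewrite derive1E; have [_ ->] := dg s.
  have := @MVB R (fun r => partial f v (x + s *: ev R v + r *: ev R u)) 0 h M.
  rewrite scale0r addr0 subr0 [x + h *: _ + _]addrAC; apply.
    by move=> r; have [] := line_is_derive (dvu (x + s *: ev R v + r *: ev R u)).
  move=> r _; rewrite derive1E; have [_ ->] := line_is_derive (dvu (x + s *: ev R v + r *: ev R u)).
  exact: hM.
rewrite normfV; apply: le_trans (ler_wpM2l _ key) _; first by rewrite invr_ge0.
by rewrite (mulrC M) -mulrA mulKf // normr_eq0.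
Qed.

Lemma swapb N (f : 'rV[R]_N -> R) (u v : 'I_N) (M : R) :
 (forall x, derivable f x (ev R u)) -> (forall x, derivable f x (ev R v)) ->
 (forall x, derivable (partial f v) x (ev R u)) ->
 (forall x, derivable (partial f u) x (ev R v)) ->
 (forall x, `|partial (partial f v) u x| <= M) ->
 forall x, `|partial (partial f u) v x| <= M.
Proof.
move=> du dv dvu duv hM x.
apply: (limbound (partial_cvg (duv x))) => h hn0.
rewrite normrM normfV; apply: le_trans (ler_wpM2l _ (lite du dv dvu hM x h)) _.
  by rewrite invr_ge0.
by rewrite mulrCA mulVf ?mulr1 // normr_eq0.
Qed.
End S.

Import Num.Def.
Section S.
Variable R : realType.

Lemma sum_ind N (i : 'I_N) (c : R) : \sum_(m < N) ((m == i)%:R * c) = c.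
Proof.
rewrite (bigD1 i) //= eqxx mul1r big1 ?addr0 // => m /negbTE ->; by rewrite mul0r.
Qed.

Lemma sum_cst N (c : R) : \sum_(m < N) c = N%:R * c.
Proof. by rewrite sumr_const card_ord mulr_natl. Qed.

Lemma DD N (i : 'I_N) (p : 'I_N -> 'I_N -> R) (a r : 'I_N -> R) (e kap rho : R) :
 0 <= e -> 0 <= rho -> 1 < kap - e * N%:R ->
 (forall l, l != i -> kap <= `|p l l|) ->
 (forall l m, l != i -> m != l -> `|p l m| <= e) ->
 (forall l, l != i -> \sum_m p l m * a m = r l) ->
 (forall l, l != i -> `|r l| <= rho) ->
 forall l, l != i -> `|a l| <= rho + e * `|a i|.
Proof.
move=> e0 rho0 hk hd ho hs hr.
set A := \big[maxr/0]_(m | m != i) `|a m|.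
have A0 : 0 <= A by rewrite /A bigmax_idl le_max lexx.
have Aa : forall m, m != i -> `|a m| <= A by move=> m hm; exact: le_bigmax_cond.
have key : forall l, l != i -> kap * A <= rho + e * `|a i| + e * N%:R * A -> A <= rho + e * `|a i|.
  move=> l _ h; nra.
have kap0 : 0 < kap.
  have : 0 <= e * N%:R by rewrite mulr_ge0.
  lra.
have bnd : forall l, l != i -> kap * `|a l| <= rho + e * `|a i| + e * N%:R * A.
  move=> l hl.
  have E1 : p l l * a l = r l - \sum_(m < N | m != l) p l m * a m.
    by rewrite -(hs l hl) (bigD1 l) //= addrK.
  apply: le_trans (_ : kap * `|a l| <= `|p l l * a l|) _.
    by rewrite normrM ler_wpM2r // hd.
  rewrite E1; apply: le_trans (ler_normB _ _) _.
  rewrite -addrA; apply: lerD; first exact: hr.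
  apply: le_trans (ler_norm_sum _ _ _) _.
  apply: le_trans (_ : _ <= \sum_(m < N | m != l) e * ((m == i)%:R * `|a i| + A)) _.
    apply: ler_sum => m hm; rewrite normrM; apply: ler_pM => //; first exact: ho.
    case: (eqVneq m i) => [->|hmi]; first by rewrite mul1r lerDl.
    by rewrite mul0r add0r; apply: Aa.
  apply: le_trans (_ : _ <= \sum_(m < N) e * ((m == i)%:R * `|a i| + A)) _.
    rewrite [X in _ <= X](bigID (fun m => m != l)) /= lerDl; apply: sumr_ge0 => m _.
    by rewrite mulr_ge0 // addr_ge0 // mulr_ge0.
  by rewrite -mulr_sumr big_split /= sum_ind sum_cst mulrDr mulrA.
have: A <= (rho + e * `|a i| + e * N%:R * A) / kap.
  apply: bigmax_le => [|l hl].
    apply: divr_ge0 (ltW kap0); apply: addr_ge0; first apply: addr_ge0 => //.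
      exact: mulr_ge0.
    by apply: mulr_ge0 => //; apply: mulr_ge0.
  by rewrite ler_pdivlMr // mulrC bnd.
rewrite ler_pdivlMr // mulrC => hA l hl.
exact: le_trans (Aa l hl) (key l hl hA).
Qed.

Lemma per_nat (u : R -> R) : (forall s, u (s + 1) = u s) ->
  forall (n : nat) s, u (s + n%:R) = u s.
Proof.
move=> hp; elim=> [|n IH] s; first by rewrite addr0.
by rewrite -natr1 addrA hp IH.
Qed.

Lemma per_int (u : R -> R) : (forall s, u (s + 1) = u s) ->
  forall (z : int) s, u (s + z%:~R) = u s.
Proof.
move=> hp z s; case: z => n; first exact: per_nat.
rewrite NegzE mulrNz.
have := per_nat hp n.+1 (s - n.+1%:R); rewrite subrK => <-.
by [].
Qed.

Lemma periodic_bound (u : R -> R) (A : R) : (forall s, derivable u s 1) ->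
  (forall s, `|u^`() s| <= A) -> (forall s, u (s + 1) = u s) ->
  forall t, `|u t - u 0| <= A.
Proof.
move=> du hA hp t.
have A0 : 0 <= A := le_trans (normr_ge0 _) (hA 0).
set z := Num.floor t.
set t' := t - z%:~R.
have -> : u t = u t' by rewrite /t' -(per_int hp z (t - z%:~R)) subrK.
have h0 : 0 <= t' by rewrite /t' subr_ge0 floor_le.
have h1 : t' < 1.
  have := floorD1_gt t; rewrite intrD => h; rewrite /t' ltrBlDl; exact: h.
apply: le_trans (@MVB _ u 0 t' A du (fun s _ => hA s)) _.
rewrite subr0 ger0_norm //; rewrite -[leRHS]mulr1; apply: ler_wpM2l => //.
exact: ltW.
Qed.
End S.

Import Num.Def.

Section Ck.
Context (R : realType) (N : nat).
Lemma Ck_cont k (f : 'rV[R]_N -> R) : Ck k f -> continuous f.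
Proof. by case: k => [[]|k []]. Qed.
Lemma Ck_der k (f : 'rV[R]_N -> R) : Ck k.+1 f -> forall j x, derivable f x (ev R j).
Proof. by move=> [_ h] j; case: (h j). Qed.
Lemma Ck_part k (f : 'rV[R]_N -> R) : Ck k.+1 f -> forall j, Ck k (partial f j).
Proof. by move=> [_ h] j; case: (h j). Qed.
Lemma is_derive_uniq (f : R -> R) (t a b : R) :
  is_derive t (1:R) f a -> is_derive t (1:R) f b -> a = b.
Proof. by case=> _ <-; case=> _ <-. Qed.
End Ck.
Arguments Ck_der {R N k f} _ j x.
Arguments Ck_part {R N k f} _ j.

Section Main.
Context (R : realType) (E kappa K : R) (N : nat) (H Phi : 'rV[R]_N -> 'rV[R]_N)
  (i : 'I_N) (x : 'rV[R]_N).
Hypotheses (hk : 1 < kappa - E) (hN : (3 <= N)%N) (h1 : H1 E kappa H)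
  (h2 : H2 E K H) (hp : is_Phi H i Phi).

Definition gam (t : R) := Phi (setc x i t).
Definition aa (m : 'I_N) (t : R) := partial (cmpt Phi m) i (setc x i t).
Definition bb (m : 'I_N) (t : R) := partial (partial (cmpt Phi m) i) i (setc x i t).
Definition PP (l m : 'I_N) (t : R) := partial (cmpt H l) m (gam t).
Definition QQ (l m k : 'I_N) (t : R) := partial (partial (cmpt H l) m) k (gam t).
Definition ee := E / N%:R.

Lemma L_setc t : setc x i t = setc x i 0 + t *: ev R i.
Proof.
apply/rowP => m; rewrite !mxE.
by case: (m == i); rewrite /= ?add0r ?mulr1 ?mulr0 ?addr0.
Qed.

Lemma CkPhi l : Ck 2 (cmpt Phi l).
Proof. by case: hp => _ [h _]. Qed.
Lemma CkH l : Ck 3 (cmpt H l).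
Proof. by case: h2 => _ [h _]. Qed.

Lemma dgam m t : is_derive t (1:R) (fun s => gam s 0 m) (aa m t).
Proof.
have := line_is_derive (Ck_der (CkPhi m) i (setc x i 0 + t *: ev R i)).
rewrite -L_setc.
have -> : (fun u : R => cmpt Phi m (setc x i 0 + u *: ev R i)) = (fun s => gam s 0 m).
  by apply/funext => s; rewrite -L_setc.
by [].
Qed.

Lemma daa m t : is_derive t (1:R) (aa m) (bb m t).
Proof.
have := line_is_derive (Ck_der (Ck_part (CkPhi m) i) i (setc x i 0 + t *: ev R i)).
rewrite -L_setc.
have -> : (fun u : R => partial (cmpt Phi m) i (setc x i 0 + u *: ev R i)) = aa m.
  by apply/funext => s; rewrite -L_setc.
by [].
Qed.

Lemma gam_i s : gam s 0 i = s.
Proof. by case: hp => _ [_ [_ [_ [h _]]]]; rewrite /gam h !mxE eqxx. Qed.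

Lemma aa_i t : aa i t = 1.
Proof.
have h := dgam i t.
have e : (fun s => gam s 0 i) = id by apply/funext => s; rewrite gam_i.
rewrite e in h; exact: is_derive_uniq h (is_derive_id t 1).
Qed.

Lemma bb_i t : bb i t = 0.
Proof.
have h := daa i t.
have e : aa i = cst 1 by apply/funext => s; rewrite aa_i.
rewrite e in h; exact: is_derive_uniq h (is_derive_cst (1:R) t (1:R)).
Qed.

Lemma dG l t : is_derive t (1:R) (fun s => cmpt H l (gam s)) (\sum_m PP l m t * aa m t).
Proof.
apply: (@CR R N (cmpt H l) gam (fun m => aa m t) t).
- exact: Ck_der (CkH l).
- by move=> j; exact: Ck_cont (Ck_part (CkH l) j).
- by move=> m /=; have := dgam m t.
Qed.

Lemma dP l m t : is_derive t (1:R) (PP l m) (\sum_k QQ l m k t * aa k t).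
Proof.
apply: (@CR R N (partial (cmpt H l) m) gam (fun k => aa k t) t).
- exact: Ck_der (Ck_part (CkH l) m).
- by move=> j; exact: Ck_cont (Ck_part (Ck_part (CkH l) m) j).
- by move=> k /=; have := dgam k t.
Qed.

Lemma dG1 l t : is_derive t (1:R) (fun s => \sum_m PP l m s * aa m s)
  (\sum_m (PP l m t * bb m t + aa m t * \sum_k QQ l m k t * aa k t)).
Proof.
have := @is_derive_sum _ _ _ N (fun m => PP l m * aa m) t 1
  (fun m => PP l m t * bb m t + aa m t * \sum_k QQ l m k t * aa k t).
rewrite fct_sumE; apply => m.
exact: is_deriveM (dP l m t) (daa m t).
Qed.


Lemma setc_setc t : setc (setc x i t) i 0 = setc x i 0.
Proof. by apply/rowP => m; rewrite !mxE; case: (m == i). Qed.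

Lemma cons_fun l : l != i -> (fun s => cmpt H l (gam s)) = cst (cmpt H l (setc x i 0)).
Proof.
move=> li; apply/funext => s /=; case: hp => _ [_ [_ [_ [_ [h _]]]]].
by rewrite /gam h // setc_setc.
Qed.

Lemma cons1 l t : l != i -> \sum_m PP l m t * aa m t = 0.
Proof.
move=> li; have h := dG l t; rewrite cons_fun // in h.
exact: is_derive_uniq h (is_derive_cst _ t (1:R)).
Qed.

Lemma cons2 l t : l != i ->
  \sum_m (PP l m t * bb m t + aa m t * \sum_k QQ l m k t * aa k t) = 0.
Proof.
move=> li; have h := dG1 l t.
have e : (fun s => \sum_m PP l m s * aa m s) = cst 0.
  by apply/funext => s; rewrite cons1.
rewrite e in h; exact: is_derive_uniq h (is_derive_cst _ t (1:R)).
Qed.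

Lemma third (u v : 'I_N) : exists w : 'I_N, (w != u) && (w != v).
Proof.
have [k hk3 hkk] : exists2 k, (k < 3)%N & (k != u :> nat) && (k != v :> nat).
  case E0: ((0 != u :> nat) && (0 != v :> nat)); first by exists 0%N.
  case E1: ((1 != u :> nat) && (1 != v :> nat)); first by exists 1%N.
  exists 2%N => //; move/negbT: E0; move/negbT: E1; lia.
exists (Ordinal (leq_trans hk3 hN)); exact: hkk.
Qed.

Lemma Npos : (0 < N%:R :> R).
Proof. rewrite ltr0n; lia. Qed.

Lemma Epos : 0 < E.
Proof.
have [w /andP[wi _]] := third i i.
case: h1 => _ [_ [_ h]]; have := le_lt_trans (normr_ge0 _) (h i w x wi).
by rewrite pmulr_lgt0 // invr_gt0 Npos.
Qed.

Lemma ee_pos : 0 < ee.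
Proof. by rewrite /ee divr_gt0 ?Epos ?Npos. Qed.

Lemma ee_N : ee * N%:R = E.
Proof. by rewrite /ee divfK // gt_eqF // Npos. Qed.

Lemma Kpos : 0 <= K.
Proof. case: h2 => _ [_ [h _]]; exact: le_trans (normr_ge0 _) (h i x). Qed.

Lemma bP l m t : m != l -> `|PP l m t| <= ee.
Proof. by move=> ml; case: h1 => _ [_ [_ h]]; apply: ltW; apply: h. Qed.

Lemma bPd l t : kappa <= `|PP l l t|.
Proof. by case: h1 => _ [_ [h _]]; apply: ltW; apply: h. Qed.

Lemma bQo l m k t : m != l -> `|QQ l m k t| <= ee.
Proof. by move=> ml; case: h2 => _ [_ [_ [h _]]]; apply: h. Qed.

Lemma bQd_gen l k y : k != l -> `|partial (partial (cmpt H l) l) k y| <= ee.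
Proof.
move=> kl.
apply: (@swapb R N (cmpt H l) l k ee).
- exact: Ck_der (CkH l) l.
- exact: Ck_der (CkH l) k.
- exact: Ck_der (Ck_part (CkH l) k) l.
- exact: Ck_der (Ck_part (CkH l) l) k.
- by move=> z; case: h2 => _ [_ [_ [h _]]]; apply: h.
Qed.

Lemma bQd l k t : k != l -> `|QQ l l k t| <= ee.
Proof. exact: bQd_gen. Qed.

Lemma bQll l t : `|QQ l l l t| <= K.
Proof. by case: h2 => _ [_ [h _]]; apply: h. Qed.

Lemma bQ l m k t : `|QQ l m k t| <= ee + K * (m == l)%:R.
Proof.
have e0 := ee_pos; have K0 := Kpos.
case: (eqVneq m l) => [->|ml]; last by rewrite mulr0 addr0 bQo.
rewrite [true%:R]/= mulr1; case: (eqVneq k l) => [->|kl].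
  by apply: le_trans (bQll l t) _; rewrite lerDr ltW.
by apply: le_trans (bQd t kl) _; rewrite lerDl.
Qed.

Lemma aA t l : l != i -> `|aa l t| <= ee.
Proof.
move=> li.
have := @DD R N i (fun l m => PP l m t) (fun m => aa m t) (fun _ => 0) ee kappa 0
  (ltW ee_pos) (lexx 0) _ _ _ _ _ l li.
rewrite aa_i normr1 mulr1 add0r; apply.
- by rewrite ee_N.
- by move=> l' _; exact: bPd.
- by move=> l' m _ ml; exact: bP.
- by move=> l' hl; exact: cons1.
- by move=> l' _; rewrite normr0.
Qed.

Lemma sum_ind1 (c : R) : \sum_(m < N) ((m == i)%:R * c) = c.
Proof. exact: sum_ind. Qed.

Lemma aall t m : `|aa m t| <= (m == i)%:R * 1 + ee.
Proof.
case: (eqVneq m i) => [->|mi].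
  by rewrite aa_i normr1 mulr1 lerDl ltW // ee_pos.
by rewrite mul0r add0r aA.
Qed.

Lemma suma t : \sum_m `|aa m t| <= 1 + E.
Proof.
apply: le_trans (ler_sum _ (fun m _ => aall t m)) _.
by rewrite big_split /= sum_ind sum_cst mulrC ee_N.
Qed.

Lemma setc_shift s : setc x i (s + 1) = setc x i s + ev R i.
Proof. by apply/rowP => m; rewrite !mxE; case: (m == i); rewrite /= ?addr0. Qed.

Lemma gam_per s m : m != i -> gam (s + 1) 0 m = gam s 0 m.
Proof.
move=> mi; case: hp => _ [_ [_ [h _]]].
by rewrite /gam setc_shift h !mxE (negbTE mi) addr0.
Qed.

Lemma gam0 m : m != i -> gam 0 0 m = x 0 m.
Proof.
move=> mi; case: hp => _ [_ [_ [_ [_ [_ h]]]]].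
by rewrite /gam h !mxE (negbTE mi).
Qed.

Lemma Delta t m : m != i -> `|gam t 0 m - x 0 m| <= ee.
Proof.
move=> mi; rewrite -(gam0 mi).
apply: (@periodic_bound R (fun s => gam s 0 m) ee).
- by move=> s; case: (dgam m s).
- move=> s; rewrite derive1E; have [_ ->] := dgam m s; exact: aA.
- by move=> s; exact: gam_per.
Qed.

Lemma Sbound l m t :
  `|\sum_k QQ l m k t * aa k t| <= (ee + K * (m == l)%:R) * (1 + E).
Proof.
apply: le_trans (ler_norm_sum _ _ _) _.
apply: le_trans (_ : _ <= \sum_k (ee + K * (m == l)%:R) * `|aa k t|) _.
  by apply: ler_sum => k _; rewrite normrM ler_wpM2r // bQ.
rewrite -mulr_sumr ler_wpM2l ?suma //.
by apply: addr_ge0; [exact: ltW ee_pos | apply: mulr_ge0; [exact: Kpos | exact: ler0n]].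
Qed.

Lemma eqle (a b : R) : a = b -> a <= b.
Proof. by move=> ->. Qed.

Lemma bB t l : l != i -> `|bb l t| <= ee * ((1 + E) * (1 + E + K)).
Proof.
move=> li.
have e0 := ee_pos; have K0 := Kpos; have E0 := Epos.
have := @DD R N i (fun l m => PP l m t) (fun m => bb m t)
  (fun l => - \sum_m aa m t * \sum_k QQ l m k t * aa k t) ee kappa
  (ee * ((1 + E) * (1 + E + K))) (ltW ee_pos) _ _ _ _ _ _ l li.
rewrite bb_i normr0 mulr0 addr0; apply.
- by rewrite !mulr_ge0 // ?addr_ge0 // ltW.
- by rewrite ee_N.
- by move=> l' _; exact: bPd.
- by move=> l' m _ ml; exact: bP.
- move=> l' hl; apply/eqP; rewrite -addr_eq0 -big_split /=; apply/eqP.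
  exact: cons2.
- move=> l' hl; rewrite normrN.
  apply: le_trans (ler_norm_sum _ _ _) _.
  apply: le_trans (_ : _ <= \sum_m (1 + E) * ((m == i)%:R * ee + ee * ee + (m == l')%:R * (ee * K))) _.
    apply: ler_sum => m _; rewrite normrM.
    apply: le_trans (ler_pM (normr_ge0 _) (normr_ge0 _) (aall t m) (Sbound l' m t)) _.
    case: (eqVneq m i) => [->|mi].
      by rewrite eq_sym (negbTE hl) /=; apply: eqle; ring.
    by rewrite [false%:R]/=; case: (m == l'); rewrite /=; apply: eqle; ring.
  rewrite -mulr_sumr !big_split /= sum_ind sum_ind sum_cst.
  have EE : N%:R * (ee * ee) = E * ee by rewrite mulrA [N%:R * _]mulrC ee_N.
  by rewrite EE; apply: eqle; ring.
Qed.

Definition GG := fun t => cmpt H i (Phi (setc x i t)).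
Definition hh := fun t => cmpt H i (setc x i t).

Lemma G1 : derive1n 1 GG = fun t => \sum_m PP i m t * aa m t.
Proof.
rewrite derive1n1; apply/funext => t; rewrite derive1E.
by have [_ ->] := dG i t.
Qed.

Lemma G2 : derive1n 2 GG =
  fun t => \sum_m (PP i m t * bb m t + aa m t * \sum_k QQ i m k t * aa k t).
Proof.
rewrite derive1nS G1; apply/funext => t; rewrite derive1E.
by have [_ ->] := dG1 i t.
Qed.

Lemma hh_line : hh = fun u => cmpt H i (setc x i 0 + u *: ev R i).
Proof. by apply/funext => u; rewrite /hh L_setc. Qed.

Lemma h1d : derive1n 1 hh = fun t => partial (cmpt H i) i (setc x i t).
Proof.
rewrite derive1n1; apply/funext => t; rewrite derive1E hh_line.
have [_ ->] := line_is_derive (Ck_der (CkH i) i (setc x i 0 + t *: ev R i)).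
by rewrite -L_setc.
Qed.

Lemma h2d : derive1n 2 hh = fun t => partial (partial (cmpt H i) i) i (setc x i t).
Proof.
rewrite derive1nS h1d; apply/funext => t; rewrite derive1E.
have -> : (fun t => partial (cmpt H i) i (setc x i t)) =
   (fun u => partial (cmpt H i) i (setc x i 0 + u *: ev R i)).
  by apply/funext => u; rewrite -L_setc.
have [_ ->] := line_is_derive (Ck_der (Ck_part (CkH i) i) i (setc x i 0 + t *: ev R i)).
by rewrite -L_setc.
Qed.

Lemma sumDelta t : \sum_m `|gam t 0 m - setc x i t 0 m| <= E.
Proof.
rewrite -ee_N mulrC -sum_cst; apply: ler_sum => m _.
rewrite !mxE; case: (eqVneq m i) => [->|mi].
  by rewrite gam_i subrr normr0 ltW // ee_pos.
exact: Delta.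
Qed.

Lemma gam_diff t j : gam t 0 j != setc x i t 0 j -> j != i.
Proof.
apply: contra => /eqP ->; by rewrite gam_i !mxE eqxx.
Qed.

Lemma B0 t : `|GG t - hh t| <= ee * E.
Proof.
apply: le_trans (@multilip R N (cmpt H i) (gam t) (setc x i t) ee _ _) _.
- exact: Ck_der (CkH i).
- move=> j y /gam_diff ji; case: h1 => _ [_ [_ h]]; apply: ltW; exact: h.
- by rewrite ler_wpM2l ?sumDelta // ltW // ee_pos.
Qed.

Lemma sum_bound (F : 'I_N -> R) (al be : R) :
  (forall m, `|F m| <= (m == i)%:R * al + be) -> `|\sum_m F m| <= al + N%:R * be.
Proof.
move=> hF; apply: le_trans (ler_norm_sum _ _ _) _.
apply: le_trans (ler_sum _ (fun m _ => hF m)) _.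
by rewrite big_split /= sum_ind sum_cst.
Qed.

Lemma diag1 t : `|PP i i t - partial (cmpt H i) i (setc x i t)| <= ee * E.
Proof.
apply: le_trans (@multilip R N (partial (cmpt H i) i) (gam t) (setc x i t) ee _ _) _.
- exact: Ck_der (Ck_part (CkH i) i).
- by move=> j y /gam_diff ji; apply: bQd_gen.
- by rewrite ler_wpM2l ?sumDelta // ltW // ee_pos.
Qed.

Lemma B1 t : `|derive1n 1 GG t - derive1n 1 hh t| <= ee * (2 * E).
Proof.
rewrite G1 h1d /= -[X in _ - X](sum_ind i) -sumrB.
have -> : ee * (2 * E) = ee * E + N%:R * (ee * ee).
  by rewrite [N%:R * (ee * ee)]mulrA [N%:R * ee]mulrC ee_N; ring.
apply: sum_bound => m.
case: (eqVneq m i) => [->|mi].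
  rewrite aa_i !mul1r mulr1; apply: le_trans (diag1 t) _.
  by rewrite lerDl mulr_ge0 // ltW // ee_pos.
rewrite [false%:R]/= !mul0r subr0 add0r normrM.
by apply: ler_pM => //; [exact: bP | exact: aA].
Qed.

Lemma diag2 t : `|QQ i i i t - partial (partial (cmpt H i) i) i (setc x i t)| <= ee * E.
Proof.
apply: le_trans (@multilip R N (partial (partial (cmpt H i) i) i) (gam t) (setc x i t) ee _ _) _.
- exact: Ck_der (Ck_part (Ck_part (CkH i) i) i).
- move=> j y /gam_diff ji.
  have [w /andP[wj wi]] := third j i.
  case: h2 => _ [_ [_ [_ [_ [h _]]]]].
  by apply: (h j i w y) => //; rewrite eq_sym.
- by rewrite ler_wpM2l ?sumDelta // ltW // ee_pos.
Qed.

Definition rho := ee * ((1 + E) * (1 + E + K)).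

Lemma B2 t : `|derive1n 2 GG t - derive1n 2 hh t| <=
  ee * (2 * E) + N%:R * (ee * rho + ee * (ee * (1 + E))).
Proof.
have e0 := ee_pos; have E0 := Epos; have K0 := Kpos.
rewrite G2 h2d /= -[X in _ - X](sum_ind i) -sumrB; apply: sum_bound => m.
case: (eqVneq m i) => [->|mi].
  rewrite bb_i aa_i mulr0 add0r !mul1r.
  apply: le_trans (_ : _ <= ee * (2 * E)) _; last first.
    have r0 : 0 <= rho.
      by rewrite /rho; apply: mulr_ge0; [exact: ltW | apply: mulr_ge0; lra].
    rewrite lerDl.
    apply: addr_ge0; first by apply: mulr_ge0 => //; exact: ltW.
    by apply: mulr_ge0; [exact: ltW | apply: mulr_ge0; [exact: ltW | lra]].
  rewrite -[X in _ - X](sum_ind i) -sumrB.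
  have -> : ee * (2 * E) = ee * E + N%:R * (ee * ee).
    by rewrite [N%:R * (ee * ee)]mulrA [N%:R * ee]mulrC ee_N; ring.
  apply: sum_bound => k.
  case: (eqVneq k i) => [->|ki].
    rewrite aa_i !mul1r mulr1; apply: le_trans (diag2 t) _.
    by rewrite lerDl mulr_ge0 // ltW.
  rewrite [false%:R]/= !mul0r subr0 add0r normrM.
  by apply: ler_pM => //; [exact: bQd | exact: aA].
rewrite [false%:R]/= !mul0r subr0 add0r.
apply: le_trans (ler_normD _ _) _; apply: lerD.
  by rewrite normrM; apply: ler_pM => //; [exact: bP | exact: bB].
rewrite normrM; apply: ler_pM => //; first exact: aA.
by have := Sbound i m t; rewrite (negbTE mi) mulr0 addr0.
Qed.

Definition CC := 2 * E + E * ((1 + E) * (1 + E + K)) + E * (1 + E).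

Lemma final : dC2_le (fun t => cmpt H i (Phi (setc x i t)))
  (fun t => cmpt H i (setc x i t)) ((E * CC) / N%:R).
Proof.
have e0 := ee_pos; have E0 := Epos; have K0 := Kpos.
have -> : (E * CC) / N%:R = ee * CC by rewrite /ee mulrAC.
have c1 : 0 <= E * ((1 + E) * (1 + E + K)).
  by apply: mulr_ge0; [exact: ltW | apply: mulr_ge0; lra].
have c2 : 0 <= E * (1 + E) by apply: mulr_ge0; [exact: ltW | lra].
have hC1 : ee * (2 * E) <= ee * CC.
  apply: ler_wpM2l; [exact: ltW | rewrite /CC; lra].
move=> t; split; [|split].
- apply: le_trans (B0 t) _; apply: le_trans hC1; rewrite ler_wpM2l ?ltW //; lra.
- exact: le_trans (B1 t) hC1.
- apply: le_trans (B2 t) _.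
  have -> : N%:R * (ee * rho + ee * (ee * (1 + E))) =
     ee * (E * ((1 + E) * (1 + E + K)) + E * (1 + E)).
    by rewrite /rho -ee_N; ring.
  by rewrite -mulrDr /CC addrA.
Qed.
End Main.

Unset Implicit Arguments.
Local Close Scope classical_set_scope.

Theorem lemma4p3 (R : realType) (E kappa K : R) :
  1 < kappa - E ->
  exists (Kc : R) (N0 : nat),
  forall (N : nat) (H : 'rV[R]_N -> 'rV[R]_N),
    (N0 <= N)%N ->
    H1 E kappa H -> H2 E K H ->
    forall (i : 'I_N) (Phi : 'rV[R]_N -> 'rV[R]_N),
      is_Phi H i Phi ->
      forall x : 'rV[R]_N,
        dC2_le (fun t => cmpt H i (Phi (setc x i t)))
               (fun t => cmpt H i (setc x i t))
               (Kc / N%:R).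
Proof.
move=> hk; exists (E * CC E K), 3%N => N H hN h1 h2 i Phi hp x.
exact: final hk hN h1 h2 hp.
Qed.
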